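(* Let $S\subseteq M_n$ be a noncommutative graph. Then $\mathcal{H}(S)=1$ if and only if $S=M_n$.
   Context: All scalars are complex; $M_n$ denotes complex $n\times n$ matrices. A noncommutative graph is a linear subspace $S\subseteq M_n$ that contains $I_n$ and is closed under conjugate transpose. For a subspace $S\subseteq M_n$, $M_m(S)$ denotes the set of $m\times m$ block matrices $B=[B_{i,j}]_{i,j\in[m]}$ with every block $B_{i,j}\in S$, viewed as elements of $M_{mn}$. The Haemers bound is $\mathcal{H}(S)=\min\{\mathrm{rk}(B):\ m\in\mathbb{N},\ B\in M_m(S),\ \sum_{i=1}^m B_{i,i}=I_n\}$. *)

(* Defs.v *)
From HB Require Import structures.
From mathcomp Require Import all_boot all_order all_algebra.
Set Implicit Arguments. Unset Strict Implicit. Unset Printing Implicit Defensive.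
Import Order.TTheory GRing.Theory Num.Theory.
Local Open Scope ring_scope.

Definition ctrmx (C : numClosedFieldType) (n : nat) (A : 'M[C]_n) : 'M[C]_n :=
  (map_mx (fun x => x^*) A)^T.

Definition nc_graph (C : numClosedFieldType) (n : nat) (S : {vspace 'M[C]_n}) :=
  (1%:M \in S) /\ (forall A : 'M[C]_n, A \in S -> ctrmx A \in S).

Definition haemers_feasible (C : numClosedFieldType) (n m : nat)
    (S : {vspace 'M[C]_n}) (B : 'I_m -> 'I_m -> 'M[C]_n) :=
  (forall i j, B i j \in S) /\ \sum_(i < m) B i i = 1%:M.

Definition block_of (C : numClosedFieldType) (n m : nat)
    (B : 'I_m -> 'I_m -> 'M[C]_n) :=
  \mxblock_(i < m, j < m) B i j.

(* haemers_bound S k : H(S) = k, i.e. k is the minimum of rk(B) over all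
   m in N and feasible B in M_m(S). *)
Definition haemers_bound (C : numClosedFieldType) (n : nat)
    (S : {vspace 'M[C]_n}) (k : nat) : Prop :=
  (exists m (B : 'I_m -> 'I_m -> 'M[C]_n),
      haemers_feasible S B /\ \rank (block_of B) = k) /\
  (forall m (B : 'I_m -> 'I_m -> 'M[C]_n),
      haemers_feasible S B -> (k <= \rank (block_of B))%N).

(* Main.v *)
Require Import Defs.
From HB Require Import structures.
From mathcomp Require Import all_boot all_order all_algebra.
From mathcomp Require Import ring.
Import GRing.Theory Num.Theory.
Local Open Scope ring_scope.

Lemma block_rank_pos (C : numClosedFieldType) (n m : nat) (hn : (0 < n)%N)
    (S : {vspace 'M[C]_n}) (B : 'I_m -> 'I_m -> 'M[C]_n) :
  haemers_feasible S B -> (1 <= \rank (block_of B))%N.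
Proof.
move=> [_ Hsum]; rewrite lt0n mxrank_eq0; apply/eqP => H0.
have Bz : forall i j, B i j = 0.
  by move=> i j; rewrite -(mxblockK B i j) -/(block_of B) H0 submxblock0.
move: Hsum; rewrite big1 // => /matrixP /(_ (Ordinal hn) (Ordinal hn)).
by rewrite !mxE eqxx /= => /eqP; rewrite eq_sym oner_eq0.
Qed.

Theorem mainTheorem9 (C : numClosedFieldType) (n : nat) (hn : (0 < n)%N)
    (S : {vspace 'M[C]_n}) (hS : nc_graph S) :
  haemers_bound S 1 <-> S = fullv.
Proof.
split.
- move=> [[m [B [[HBS Hsum] Hr]]] _].
  have := mulmx_base (block_of B).
  move: (col_base (block_of B)) (row_base (block_of B)); rewrite Hr => a b hab.
  have BE : forall i j k l, B i j k l =
      a (tagnat.Rank i k) 0 * b 0 (tagnat.Rank j l).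
    move=> i j k l; rewrite -(mxblockK B i j) -/(block_of B) -hab.
    by rewrite /submxblock !mxE big_ord1.
  pose U : 'M[C]_(n, m) := \matrix_(k, i) a (tagnat.Rank i k) 0.
  pose W : 'M[C]_(m, n) := \matrix_(i, l) b 0 (tagnat.Rank i l).
  have UW : U *m W = 1%:M.
    rewrite -Hsum; apply/matrixP => k l; rewrite summxE !mxE.
    by apply: eq_bigr => i _; rewrite BE !mxE.
  apply/vspaceP => X; rewrite memvf; apply/idP.
  pose Y := W *m X *m U.
  have -> : X = \sum_i \sum_j Y i j *: B i j.
    have -> : X = U *m Y *m W.
      by rewrite /Y !mulmxA UW mul1mx -!mulmxA UW mulmx1.
    apply/matrixP => k l; rewrite summxE !mxE.
    rewrite (eq_bigr (fun j => \sum_i U k i * Y i j * W j l)); last first.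
      by move=> j _; rewrite mxE mulr_suml.
    rewrite exchange_big; apply: eq_bigr => i _; rewrite summxE.
    apply: eq_bigr => j _; rewrite !mxE BE ?mxE; ring.
  apply: rpred_sum => i _; apply: rpred_sum => j _; exact: memvZ.
- move=> ->; split; last first.
    by move=> m B HB; exact: (@block_rank_pos _ _ _ hn _ _ HB).
  exists n, (fun i j => delta_mx i j); split.
    split; first by move=> i j; rewrite memvf.
    apply/matrixP => k l; rewrite summxE !mxE.
    rewrite (bigD1 k) //= big1 ?addr0; last first.
      by move=> i /negbTE ne; rewrite mxE eq_sym ne.
    by rewrite mxE eqxx /= eq_sym.
  pose N := (\sum_(i < n) n)%N.
  pose a : 'M[C]_(N, 1) := \matrix_(p, _) ((tagnat.sig2 p : nat) == tagnat.sig1 p)%:R.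
  pose b : 'M[C]_(1, N) := \matrix_(_, q) ((tagnat.sig2 q : nat) == tagnat.sig1 q)%:R.
  have E : block_of (fun i j => delta_mx i j) = a *m b.
    apply/matrixP => p q; rewrite !mxE big_ord1 !mxE.
    by rewrite -natrM mulnb.
  apply/eqP; rewrite eqn_leq; apply/andP; split.
    by rewrite E; apply: leq_trans (mxrankM_maxl _ _) (rank_leq_col _).
  apply: (@block_rank_pos _ _ _ hn fullv); split; last first.
    apply/matrixP => k l; rewrite summxE !mxE.
    rewrite (bigD1 k) //= big1 ?addr0; last first.
      by move=> i /negbTE ne; rewrite mxE eq_sym ne.
    by rewrite mxE eqxx /= eq_sym.
  by move=> i j; rewrite memvf.
Qed.
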